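(* Let $X$ and $V$ be independent random variables, where $V\sim\mathcal N(0,\sigma^2)$ and $X\le_{df}(d,w,o)$ for some nonzero $d$ and nonnegative $w,o$ with $|d|>w$. Then $$\mathbb E[(X-Q_d(X+V))^2]\le\mathbb E[(X-Q_d(X))^2]+\sum_{i=1}^{\infty}\Big(i|d|+\frac w2\Big)^2\cdot 2Q\Big(\frac{(2i-1)|d|-w}{2\sigma}\Big)+o\cdot\Big(\big(d+\tfrac d2\big)^2+\sum_{i=2}^{\infty}\big(id+\tfrac d2\big)^2\cdot 2Q\Big(\frac{(i-1)|d|}{\sigma}\Big)\Big).$$
   Context: For $x\neq0$ and real $y$, $Q_x(y)=x\lfloor y/x+1/2\rfloor$ (quantization) and $R_x(y)=y-Q_x(y)$. The unsubscripted $Q$ denotes the Gaussian tail function $Q(x)=\frac1{\sqrt{2\pi}}\int_x^\infty e^{-u^2/2}\,du$. For a random variable $X$, nonzero $d$ and nonnegative reals $w,o$ with $|d|>w$, write $X\le_{df}(d,w,o)$ if $\mathbb P\{X\notin\bigcup_{i\in\mathbb Z}[id-\frac w2,id+\frac w2]\}\le o$. *)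

(* Defs.v *)
From HB Require Import structures.
From mathcomp Require Import all_boot all_order all_algebra.
From mathcomp Require Import all_classical all_reals all_analysis.
Set Implicit Arguments. Unset Strict Implicit. Unset Printing Implicit Defensive.
Import Order.TTheory GRing.Theory Num.Theory.
Import numFieldNormedType.Exports.
Local Open Scope classical_set_scope.
Local Open Scope ring_scope.

Definition quant {R : realType} (x y : R) : R :=
  x * (Num.floor (y / x + 2^-1))%:~R.

Definition qrem {R : realType} (x y : R) : R := y - quant x y.

(* Gaussian tail function Q(x) = 1/sqrt(2 pi) * int_x^oo exp(-u^2/2) du
   (extended-real valued; it is always finite) *)
Definition gaussQ {R : realType} (x : R) : \bar R :=
  ((Num.sqrt (pi *+ 2))^-1)%:E *
  (\int[@lebesgue_measure R]_(u in `[x, +oo[) (expR (- (u ^+ 2) / 2))%:E)%E.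

Definition le_df {dT} {T : measurableType dT} {R : realType}
  (P : probability T R) (X : T -> R) (d w o : R) : Prop :=
  (P [set t | ~ (exists i : int, (i%:~R * d - w / 2 <= X t <= i%:~R * d + w / 2)%R)]
  <= o%:E)%E.

Definition indep2 {dT} {T : measurableType dT} {R : realType}
  (P : probability T R) (X Y : T -> R) : Prop :=
  forall A B : set R, measurable A -> measurable B ->
    P (X @^-1` A `&` Y @^-1` B) = (P (X @^-1` A) * P (Y @^-1` B))%E.

(* Main.v *)
Require Import Defs.
From HB Require Import structures.
From mathcomp Require Import all_boot all_order all_algebra.
From mathcomp Require Import all_classical all_reals all_analysis.
From mathcomp Require Import measurable_realfun.
From mathcomp Require Import ring lra.
Import Order.TTheory GRing.Theory Num.Theory.
Import numFieldNormedType.Exports.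
Local Open Scope classical_set_scope.
Local Open Scope ring_scope.
Section G.
Context {R : realType}.
Local Open Scope ereal_scope.
Lemma gauss_tail (s c : R) : (0 < s)%R -> (0 < c)%R ->
  \int[@lebesgue_measure R]_(x in `[c, +oo[) (normal_pdf 0 s x)%:E = gaussQ (c / s).
Proof.
move=> s0 c0.
have sn0 : s != 0%R by rewrite gt_eqF.
have Fa : c = (fun x => s * x)%R (c / s)%R by rewrite /= mulrC divfK.
rewrite {1}Fa.
have F'E : (fun x : R => s * x)%R^`()%classic = cst s.
  apply/funext => x; rewrite derive1E deriveM// derive_cst derive_id.
  by rewrite scaler0 addr0 /GRing.scale/= mulr1.
rewrite increasing_ge0_integration_by_substitutiony //; first last.
- by move=> x _; exact: normal_pdf_ge0.
- exact/continuous_subspaceT/continuous_normal_pdf.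
- by apply: (@gt0_cvgMry _ _ _ s id) => //; exact: cvg_id.
- split; first by move=> x _; exact: derivableM.
  apply: cvg_at_right_filter; apply: cvgM; [exact: cvg_cst|exact: cvg_id].
- by rewrite F'E; exact: is_cvg_cst.
- by rewrite F'E; exact: is_cvg_cst.
- by rewrite F'E => x _; exact: cst_continuous.
- by move=> x y _ _; rewrite ltr_pM2l.
rewrite F'E /gaussQ -ge0_integralZl_EFin //; last first.
  apply/measurable_EFinP; apply: measurable_funTS.
  apply: continuous_measurable_fun => x.
  apply: continuous_comp; last exact: continuous_expR.
  apply: continuousM; last exact: cst_continuous.
  apply: continuousN; exact: sqr_continuous.
apply: eq_integral => x _; congr EFin.
rewrite /= normal_pdfE // /normal_peak /normal_fun !fctE /= subr0.
have hq : (Num.sqrt (pi *+ 2) != 0 :> R)%R.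
  by rewrite gt_eqF // sqrtr_gt0 pmulrn_lgt0 // pi_gt0.
have -> : (- (s * x) ^+ 2 / (s ^+ 2 *+ 2) = - x ^+ 2 / 2)%R.
  by rewrite -mulr_natr; field; rewrite sn0.
rewrite -mulrnAr sqrtrM ?sqr_ge0 // sqrtr_sqr ger0_norm ?ltW //.
by field; rewrite sn0 hq.
Qed.

Local Close Scope ereal_scope.
Lemma setA (c : R) : (0 < c)%R -> [set x : R | (c <= `|x|)%R] = `]-oo, (- c)%R] `|` `[c, +oo[.
Proof.
move=> c0.
apply/seteqP; split => x /=.
    rewrite !in_itv /= andbT.
    case: (leP 0 x) => x0.
      by rewrite ger0_norm // => ->; right.
    by rewrite ltr0_norm // lerNr => ->; left.
  rewrite !in_itv /= andbT; case => h.
    have xn : x <= 0 by apply: le_trans h _; rewrite oppr_le0 ltW.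
    by rewrite ler0_norm // lerNr.
  have xp : 0 <= x by apply: le_trans h; exact: ltW.
  by rewrite ger0_norm.
Qed.
Local Open Scope ereal_scope.

Lemma gauss_two (s c : R) : (0 < s)%R -> (0 < c)%R ->
  normal_prob 0 s [set x : R | (c <= `|x|)%R] = 2%:E * gaussQ (c / s).
Proof.
move=> s0 c0.
have sn0 : s != 0%R by rewrite gt_eqF.
rewrite setA // /normal_prob.
rewrite ge0_integral_setU //; last 3 first.
- apply/measurable_EFinP; apply: measurable_funTS; exact: measurable_normal_pdf.
- by move=> x _; rewrite lee_fin normal_pdf_ge0.
- apply/disj_setPS => x [] /=; rewrite !in_itv /= andbT => h1 h2.
  have := le_trans h2 h1; lra.
rewrite ge0_integration_by_substitutionNy; last 2 first.
- exact/continuous_subspaceT/continuous_normal_pdf.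
- by move=> x _; exact: normal_pdf_ge0.
have -> : \int[lebesgue_measure]_(x in `[c, +oo[) ((normal_pdf 0 s \o -%R) x)%:E =
   \int[lebesgue_measure]_(x in `[c, +oo[) (normal_pdf 0 s x)%:E.
  apply: eq_integral => x _; congr EFin.
  by rewrite /= !normal_pdfE // /normal_fun !subr0 sqrrN.
by rewrite gauss_tail // -mule2n mule_natl.
Qed.
End G.
Section Real.
Context {R : realType}.
Implicit Types (d w x y v : R).

Lemma quant_err d y : d != 0 -> `|y - quant d y| <= `|d| / 2.
Proof.
move=> d0; rewrite /quant.
have := floor_itv (y / d + 2^-1); rewrite intrD.
set f := ((Num.floor _)%:~R) => /andP [h1 h2].
have -> : y - d * f = d * ((y / d + 2^-1 - f) - 2^-1) by field.
rewrite normrM ler_pM2l ?normr_gt0 // ler_norml; apply/andP; split; lra.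
Qed.

Lemma quant_eq d y (k : int) : d != 0 -> `|y - k%:~R * d| < `|d| / 2 ->
  quant d y = k%:~R * d.
Proof.
move=> d0 H; rewrite /quant mulrC; congr (_ * _); congr intmul.
have e : y - k%:~R * d = d * (y / d - k%:~R) by field.
rewrite e normrM ltr_pM2l ?normr_gt0 // ltr_norml in H.
case/andP: H => H1 H2.
apply: floor_def; rewrite intrD; apply/andP; split; lra.
Qed.

Lemma quant_meas d : measurable_fun setT (quant d).
Proof.
rewrite /quant; apply: measurable_funM => //.
have h1 : measurable_fun setT (fun z : R => ((Num.floor z)%:~R : R)).
  apply: nondecreasing_measurable => // a b ab.
  by rewrite ler_int le_floor.
have h2 : measurable_fun setT (fun y : R => y / d + 2^-1).
  apply: measurable_funD => //; exact: mulrr_measurable.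
exact: (measurableT_comp h1 h2).
Qed.


Lemma sq_le (a B : R) : `|a| <= B -> a ^+ 2 <= B ^+ 2.
Proof.
move=> h; have h0 := normr_ge0 a.
rewrite -(real_normK (num_real a)).
move: h0 h; set u := `|a|; move=> h0 h; nra.
Qed.

Lemma bad_bound d x v : d != 0 ->
  (x - quant d (x + v)) ^+ 2 <= (d + d / 2) ^+ 2 \/
  exists i : nat, (2 <= i)%N /\ (x - quant d (x + v)) ^+ 2 <= (i%:R * d + d / 2) ^+ 2
     /\ (i%:R - 1) * `|d| <= `|v|.
Proof.
move=> d0; set e := x - quant d (x + v).
have dp : 0 < `|d| by rewrite normr_gt0.
have He : `|e| <= `|d| / 2 + `|v|.
  have -> : e = ((x + v) - quant d (x + v)) - v by rewrite /e; ring.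
  apply: le_trans (ler_normB _ _) _; rewrite lerD2r; exact: quant_err.
case: (ltP `|v| `|d|) => hv.
  left; rewrite -[(d + d / 2) ^+ 2](real_normK (num_real _)); apply: sq_le.
  have -> : d + d / 2 = d * (3 / 2) by field.
  rewrite normrM (ger0_norm (x := 3 / 2)); last by lra.
  lra.
right; have vd : 0 <= `|v| / `|d| by rewrite divr_ge0.
have := truncn_itv vd; set t := Num.truncn _ => /andP [t1 t2].
have t0 : (0 < t)%N.
  rewrite lt0n; apply/eqP => t0; move: t2; rewrite t0 ltr_pdivrMr // mul1r; lra.
exists t.+1; split; first by [].
have h1 : t%:R * `|d| <= `|v| by rewrite -ler_pdivlMr.
have h2 : `|v| < t.+1%:R * `|d| by rewrite -ltr_pdivrMr.
split; last by rewrite -addn1 natrD addrK.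
rewrite -[(_ + d / 2) ^+ 2](real_normK (num_real _)); apply: sq_le.
have -> : t.+1%:R * d + d / 2 = d * (t.+1%:R + 2^-1) by field.
rewrite normrM (ger0_norm (x := _ + 2^-1)); last by rewrite addr_ge0.
rewrite -addn1 natrD in h2 *; lra.
Qed.

Lemma good_bound d w x v : d != 0 -> 0 <= w -> `|x - quant d x| <= w / 2 ->
  x - quant d (x + v) = x - quant d x \/
  exists i : nat, (1 <= i)%N /\ (x - quant d (x + v)) ^+ 2 <= (i%:R * `|d| + w / 2) ^+ 2
     /\ ((i%:R *+ 2 - 1) * `|d| - w) / 2 <= `|v|.
Proof.
move=> d0 w0 hr.
have dp : 0 < `|d| by rewrite normr_gt0.
have hd := @quant_err d (x + v) d0.
move: hr hd; rewrite /quant.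
set n := Num.floor ((x + v) / d + 2^-1); set k := Num.floor (x / d + 2^-1).
move=> hr hd.
case: (eqVneq n k) => [->|nk]; first by left.
right; exists `|n - k|%N; split; first by rewrite absz_gt0 subr_eq0.
have hj : `|d * (n - k)%:~R| = `|n - k|%N%:R * `|d|.
  by rewrite normrM natr_absz intr_norm mulrC.
set i := `|n - k|%N in hj *.
have e1 : x - d * n%:~R = (x - d * k%:~R) - d * (n - k)%:~R.
  by rewrite intrB; ring.
have v1 : d * (n - k)%:~R = v - ((x + v) - d * n%:~R) + (x - d * k%:~R).
  by rewrite intrB; ring.
split.
  apply: sq_le; rewrite e1; apply: le_trans (ler_normB _ _) _; lra.
have := ler_normD (v - ((x + v) - d * n%:~R)) (x - d * k%:~R).
have := ler_normB v ((x + v) - d * n%:~R).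
rewrite -v1 hj => h1 h2.
rewrite -mulr_natr; lra.
Qed.
End Real.

Section Ext.
Context {R : realType}.
Local Open Scope ereal_scope.

Lemma term_le_series (u : nat -> \bar R) k : (forall n, 0 <= u n) ->
  u k <= \sum_(n <oo) u n.
Proof.
move=> u0; apply: le_trans (nneseries_lim_ge k.+1 (fun n _ _ => u0 n)).
rewrite big_nat_recr //=; rewrite leeDr //; exact: sume_ge0.
Qed.

Lemma eq_eseries_from N (f g : nat -> \bar R) : (forall i, (N <= i)%N -> f i = g i) ->
  \sum_(N <= i <oo) f i = \sum_(N <= i <oo) g i.
Proof.
move=> h; apply/congr_lim/funext => n; apply: eq_big_nat => i /andP[hi _]; exact: h.
Qed.

Lemma gaussQ_ge0 (x : R) : 0 <= gaussQ x.
Proof.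
rewrite /gaussQ; apply: mule_ge0; first by rewrite lee_fin invr_ge0 sqrtr_ge0.
by apply: integral_ge0 => y _; rewrite lee_fin expR_ge0.
Qed.

Lemma le_int_nm d (T : measurableType d) (mu : {measure set T -> \bar R})
  (f g : T -> \bar R) : (forall x, 0 <= f x) -> (forall x, f x <= g x) ->
  \int[mu]_x f x <= \int[mu]_x g x.
Proof.
move=> f0 fg.
have g0 : forall x, 0 <= g x by move=> x; exact: le_trans (f0 x) (fg x).
rewrite !ge0_integralTE //.
apply: le_ereal_sup => _ [h hf <-]; exists h => //= x.
exact: le_trans (hf x) (fg x).
Qed.
End Ext.

Lemma bad_set {R : realType} (d w x : R) : d != 0 -> 0 <= w -> w < `|d| ->
  (~ exists i : int, (i%:~R * d - w / 2 <= x <= i%:~R * d + w / 2)) <->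
  w / 2 < `|x - quant d x|.
Proof.
move=> d0 w0 wd; split.
  move=> nex; rewrite ltNge; apply/negP => hr; apply: nex.
  exists (Num.floor (x / d + 2^-1)).
  move: hr; rewrite /quant ler_norml => /andP[h1 h2].
  apply/andP; split; rewrite mulrC; lra.
move=> hr [i /andP[h1 h2]].
have hq : quant d x = i%:~R * d.
  apply: quant_eq => //; rewrite ltr_norml; apply/andP; split; lra.
move: hr; rewrite hq ltNge ler_norml; apply/negP/negPn/andP; split; lra.
Qed.

Theorem lemma6 (dT : measure_display) (T : measurableType dT) (R : realType)
  (P : probability T R) (X V : {RV P >-> R}) (sigma d w o : R) :
  0 < sigma ->
  (forall A : set R, measurable A -> distribution P V A = normal_prob 0 sigma A) ->
  indep2 P X V ->
  d != 0 -> 0 <= w -> 0 <= o -> w < `|d| ->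
  le_df P X d w o ->
  ('E_P[fun t => ((X t - quant d (X t + V t)) ^+ 2)%R]
   <= 'E_P[fun t => ((X t - quant d (X t)) ^+ 2)%R]
      + (\sum_(1 <= i <oo)
          (((i%:R * `|d| + w / 2) ^+ 2 *+ 2)%:E
           * gaussQ (((i%:R *+ 2 - 1) * `|d| - w) / (sigma *+ 2))))
      + o%:E * (((d + d / 2) ^+ 2)%:E
          + \sum_(2 <= i <oo)
              (((i%:R * d + d / 2) ^+ 2 *+ 2)%:E
               * gaussQ ((i%:R - 1) * `|d| / sigma))))%E.
Proof.
move=> s0 hV hind d0 w0 o0 wd hdf.
have dp : 0 < `|d| by rewrite normr_gt0.
have mX : measurable_fun setT X by exact: measurable_funP.
have mV : measurable_fun setT V by exact: measurable_funP.
have mq : measurable_fun setT (fun t => quant d (X t)) := measurableT_comp (quant_meas d) mX.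
pose SB := [set y : R | w / 2 < `|y - quant d y|].
have mSB : measurable SB.
  have mf : measurable_fun setT (fun y : R => `|y - quant d y|).
    apply: measurableT_comp => //; apply: measurable_funB => //; exact: quant_meas.
  have := mf measurableT _ (measurable_itv `]w / 2, +oo[).
  by rewrite setTI; congr measurable; apply/seteqP; split => y /=; rewrite in_itv /= andbT.
pose SA (c : R) := [set y : R | c <= `|y|].
have mSA c : measurable (SA c).
  have := (@normr_measurable R setT) measurableT _ (measurable_itv `[c, +oo[).
  by rewrite setTI; congr measurable; apply/seteqP; split => y /=; rewrite in_itv /= andbT.
pose B := X @^-1` SB.
have mB : measurable B by rewrite -[B]setTI; exact: mX.
pose A c := V @^-1` SA c.
have mA c : measurable (A c) by rewrite -[A c]setTI; exact: mV.
have hB : (P B <= o%:E)%E.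
  move: hdf; rewrite /le_df; congr (P _ <= _)%E.
  apply/seteqP; split => t /=; [exact: (@bad_set R d w (X t) d0 w0 wd).1|exact: (@bad_set R d w (X t) d0 w0 wd).2].
have hPA c : 0 < c -> P (A c) = (2%:E * gaussQ (c / sigma))%E.
  move=> c0; rewrite -gauss_two //; exact: hV.
have hPBA c : 0 < c -> (P (B `&` A c) <= o%:E * (2%:E * gaussQ (c / sigma)))%E.
  move=> c0; rewrite hind // hPA //; apply: lee_wpmul2r => //.
  by apply: mule_ge0 => //; exact: gaussQ_ge0.
pose c1 (n : nat) := ((n%:R *+ 2 - 1) * `|d| - w) / 2.
pose c2 (n : nat) := (n%:R - 1) * `|d|.
pose k1 (n : nat) := (n%:R * `|d| + w / 2) ^+ 2.
pose k2 (n : nat) := (n%:R * d + d / 2) ^+ 2.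
pose r t := X t - quant d (X t).
pose hh (n : nat) (t : T) : \bar R := if n == 0%N then
   ((r t) ^+ 2 + (d + d / 2) ^+ 2 * \1_B t)%:E
  else (k1 n * \1_(A (c1 n)) t + (if (2 <= n)%N then k2 n * \1_(B `&` A (c2 n)) t else 0))%:E.
have hh0 n t : (0 <= hh n t)%E.
  rewrite /hh; case: ifP => _; rewrite lee_fin.
    by apply: addr_ge0; [exact: sqr_ge0|apply: mulr_ge0 => //; exact: sqr_ge0].
  apply: addr_ge0; first by apply: mulr_ge0 => //; exact: sqr_ge0.
  by case: ifP => _ //; apply: mulr_ge0 => //; exact: sqr_ge0.
have pw t : (((X t - quant d (X t + V t)) ^+ 2)%:E <= \sum_(n <oo) hh n t)%E.
  case: (leP `|r t| (w / 2)) => hr.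
    case: (@good_bound R d w (X t) (V t) d0 w0 hr) => [-> | [i [i1 [he hv]]]].
      apply: (le_trans _ (term_le_series (hh ^~ t) 0 (fun n => hh0 n t))).
      rewrite /hh eqxx lee_fin lerDl; apply: mulr_ge0 => //; exact: sqr_ge0.
    apply: (le_trans _ (term_le_series (hh ^~ t) i (fun n => hh0 n t))).
    rewrite /hh; have -> : (i == 0%N) = false by apply/negbTE; rewrite -lt0n.
    rewrite lee_fin indicE mem_set ?mulr1; last exact: hv.
    apply: le_trans he _; rewrite lerDl.
    by case: ifP => _ //; apply: mulr_ge0 => //; exact: sqr_ge0.
  have Bt : B t by exact: hr.
  case: (@bad_bound R d (X t) (V t) d0) => [he | [i [i2 [he hv]]]].
    apply: (le_trans _ (term_le_series (hh ^~ t) 0 (fun n => hh0 n t))).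
    rewrite /hh eqxx lee_fin indicE mem_set // mulr1.
    by apply: le_trans he _; rewrite lerDr; exact: sqr_ge0.
  apply: (le_trans _ (term_le_series (hh ^~ t) i (fun n => hh0 n t))).
  rewrite /hh; have -> : (i == 0%N) = false by apply/negbTE; rewrite -lt0n; exact: ltnW.
  rewrite i2 lee_fin (_ : \1_(B `&` A (c2 i)) t = 1) ?mulr1; last first.
    by rewrite indicE mem_set //; split => //; exact: hv.
  apply: le_trans he _; rewrite lerDr.
  by apply: mulr_ge0 => //; exact: sqr_ge0.
have mhh n : measurable_fun setT (hh n).
  rewrite /hh /=; case: (n == 0%N); apply/measurable_EFinP; apply: measurable_funD.
  - by apply: measurable_funX; exact: measurable_funB.
  - by apply: measurable_funM => //; exact: measurable_indic.
  - by apply: measurable_funM => //; exact: measurable_indic.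
  - case: (2 <= n)%N => //; apply: measurable_funM => //; apply: measurable_indic.
    exact: measurableI.
have intCI (c : R) (S : set T) : 0 <= c -> measurable S ->
    (\int[P]_t (c * \1_S t)%:E = c%:E * P S)%E.
  move=> c0 mS; under eq_integral do rewrite EFinM.
  rewrite ge0_integralZl_EFin //; try (by rewrite integral_indic // setIT);
   try (by move=> t _; rewrite lee_fin indicE);
   try (by apply/measurable_EFinP; exact: measurable_indic).
have sq0 (x : R) : 0 <= x ^+ 2 by exact: sqr_ge0.
pose u (n : nat) : \bar R := if n == 0%N then
    ('E_P[fun t => ((X t - quant d (X t)) ^+ 2)%R] + o%:E * ((d + d / 2) ^+ 2)%:E)%E
  else (((n%:R * `|d| + w / 2) ^+ 2 *+ 2)%:E
           * gaussQ (((n%:R *+ 2 - 1) * `|d| - w) / (sigma *+ 2))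
        + if (2 <= n)%N then o%:E * (((n%:R * d + d / 2) ^+ 2 *+ 2)%:E
               * gaussQ ((n%:R - 1) * `|d| / sigma)) else 0)%E.
have intU n : (\int[P]_t hh n t <= u n)%E.
  rewrite /hh /u /=; case: (boolP (n == 0%N)) => n0.
    under eq_integral do rewrite EFinD.
    rewrite ge0_integralD //; last 4 first.
    - by move=> t _; rewrite lee_fin.
    - by apply/measurable_EFinP; apply: measurable_funX; exact: measurable_funB.
    - by move=> t _; rewrite lee_fin; apply: mulr_ge0 => //; rewrite indicE.
    - by apply/measurable_EFinP; apply: measurable_funM => //; exact: measurable_indic.
    rewrite intCI // unlock leeD2l // muleC; apply: lee_wpmul2r => //.
    by rewrite lee_fin.
  have n1 : (1 <= n)%N by rewrite lt0n.
  have nR : 1 <= n%:R :> R by rewrite ler1n.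
  have c1p : 0 < c1 n by rewrite /c1 mulr2n; apply: divr_gt0 => //; nra.
  have e1 : c1 n / sigma = ((n%:R *+ 2 - 1) * `|d| - w) / (sigma *+ 2).
    by rewrite /c1 -mulr_natr; field; rewrite gt_eqF.
  under eq_integral do rewrite EFinD.
  rewrite ge0_integralD //; last 4 first.
  - by move=> t _; rewrite lee_fin; apply: mulr_ge0; [exact: sqr_ge0|rewrite indicE].
  - by apply/measurable_EFinP; apply: measurable_funM => //; exact: measurable_indic.
  - by move=> t _; rewrite lee_fin; case: ifP => _ //; apply: mulr_ge0; [exact: sqr_ge0|rewrite indicE].
  - apply/measurable_EFinP; case: (2 <= n)%N => //; apply: measurable_funM => //.
    by apply: measurable_indic; exact: measurableI.
  rewrite intCI //; last exact: sqr_ge0.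
  apply: leeD.
    by rewrite hPA // e1 muleA -EFinM mulr_natr.
  case: ifP => h2; last by rewrite integral0_eq.
  have nR2 : 2 <= n%:R :> R by rewrite ler_nat.
  have c2p : 0 < c2 n.
    by rewrite /c2; apply: mulr_gt0 => //; rewrite subr_gt0 (lt_le_trans _ nR2) // ltr1n.
  rewrite intCI //; [|exact: sqr_ge0|exact: measurableI].
  apply: le_trans (lee_wpmul2l _ (hPBA _ c2p)) _; first by rewrite lee_fin; exact: sqr_ge0.
  rewrite muleCA; apply: lee_wpmul2l; first by rewrite lee_fin.
  by rewrite muleA -EFinM mulr_natr.
have gQ0 (x : R) := @gaussQ_ge0 R x.
pose a (k : nat) := (((k%:R * `|d| + w / 2) ^+ 2 *+ 2)%:E
           * gaussQ (((k%:R *+ 2 - 1) * `|d| - w) / (sigma *+ 2)))%E.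
pose g2 (k : nat) := (((k%:R * d + d / 2) ^+ 2 *+ 2)%:E
               * gaussQ ((k%:R - 1) * `|d| / sigma))%E.
pose b (k : nat) := if (2 <= k)%N then (o%:E * g2 k)%E else 0%E.
have a0 k : (0 <= a k)%E by apply: mule_ge0 => //; rewrite lee_fin mulrn_wge0.
have g20 k : (0 <= g2 k)%E by apply: mule_ge0 => //; rewrite lee_fin mulrn_wge0.
have b0 k : (0 <= b k)%E by rewrite /b; case: ifP => // _; apply: mule_ge0.
have E0 : (0 <= 'E_P[fun t => ((X t - quant d (X t)) ^+ 2)%R])%E.
  by apply: expectation_ge0 => t; exact: sqr_ge0.
have u0 n : (0 <= u n)%E.
  rewrite /u; case: (n == 0%N).
    by apply: adde_ge0 => //; apply: mule_ge0; rewrite lee_fin.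
  exact: (adde_ge0 (a0 n) (b0 n)).
rewrite {1}unlock.
apply: le_trans.
  apply: (@le_int_nm R _ _ P); last exact: pw.
  by move=> t; rewrite lee_fin; exact: sqr_ge0.
rewrite integral_nneseries //; try (by move=> n t _; exact: hh0).
apply: le_trans.
  apply: (lee_nneseries (v := u)); last by move=> n _; exact: intU.
  by move=> n _ _; apply: integral_ge0 => t _; exact: hh0.
rewrite nneseries_recl //; try (by move=> k _; exact: u0).
have -> : u 0%N = ('E_P[fun t => ((X t - quant d (X t)) ^+ 2)%R]
   + o%:E * ((d + d / 2) ^+ 2)%:E)%E by [].
rewrite (@eq_eseries_from R 1 u (fun k => a k + b k)%E); last first.
  by move=> k; case: k.
rewrite nneseriesD //.
have hb : (\sum_(1 <= i <oo) b i = o%:E * \sum_(2 <= i <oo) g2 i)%E.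
  rewrite (@nneseries_split R b 1 1) //.
  rewrite (_ : (1 + 1)%N = 2%N) // big_nat1.
  rewrite {1}/b /= add0e.
  rewrite (@eq_eseries_from R 2 b (fun k => o%:E * g2 k)%E); last first.
    by move=> k hk2; rewrite /b hk2.
  by rewrite nneseriesZl.
rewrite hb ge0_muleDr; last 2 first.
- by rewrite lee_fin; exact: sqr_ge0.
- by apply: nneseries_ge0 => n _ _; exact: g20.
by rewrite addeACA.
Qed.
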